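(* Let $\psi\in\mathcal W^-$, let $Y$ be a measurable space with finite measures $\mu_k$ ($k\in\mathbb N$) and $\mu$, and let $f_k,f$ be bounded functions on $Y$ that are $\mu_k$-measurable and $\mu$-measurable respectively. If $\int_Y\psi(cf_k)\,d\mu_k\to\int_Y\psi(cf)\,d\mu$ for every $c\in[0,\infty)$, then $\|f_k\|_{\psi,\mu_k}\to\|f\|_{\psi,\mu}$.
   Context: $\mathcal W^-$: functions $\psi:[-\infty,\infty]\to[0,\infty]$, even, continuous on $\mathbb R$, $\psi(0)=0$, $\psi(\pm\infty)=\infty$, smooth, concave, strictly increasing on $(0,\infty)$. For a finite measure $\nu$ and measurable $g$, the weak quasi-norm is $\|g\|_{\psi,\nu}=\inf\{N>0:\int_Y\psi(g/N)\,d\nu\le1\}$. *)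

(* Defs.v *)
From HB Require Import structures.
From mathcomp Require Import all_boot all_order all_algebra.
From mathcomp Require Import all_classical all_reals all_analysis.
Set Implicit Arguments. Unset Strict Implicit. Unset Printing Implicit Defensive.
Import Order.TTheory GRing.Theory Num.Theory.
Import numFieldNormedType.Exports.
Local Open Scope classical_set_scope.
Local Open Scope ring_scope.

(* The class W^- restricted to the real line (values at +-oo are never used,
   since only bounded functions are plugged in). psi : R -> R, nonnegative. *)
Definition smooth_pos (R : realType) (psi : R -> R) : Prop :=
  forall (n : nat) (x : R), 0 < x -> derivable (iter n (@derive1 R R) psi) x 1.

Definition Wminus (R : realType) (psi : R -> R) : Prop :=
  (forall x, 0 <= psi x) /\
  (forall x, psi (- x) = psi x) /\
  continuous psi /\
  psi 0 = 0 /\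
  smooth_pos psi /\
  (forall x y t, 0 < x -> 0 < y -> 0 <= t -> t <= 1 ->
     t * psi x + (1 - t) * psi y <= psi (t * x + (1 - t) * y)) /\
  (forall x y, 0 < x -> x < y -> psi x < psi y).

(* weak quasi-norm  ||g||_{psi,nu} = inf {N > 0 : \int psi(g/N) dnu <= 1},
   taken in the extended reals (inf of the empty set is +oo). *)
Definition psi_norm (d : measure_display) (Y : measurableType d) (R : realType)
  (psi : R -> R) (nu : {measure set Y -> \bar R}) (g : Y -> R) : \bar R :=
  ereal_inf [set (N%:E)%E | N in [set N : R | 0 < N /\
     (\int[nu]_(y in [set: Y]) (psi (g y / N))%:E <= 1)%E]].

(* Main.v *)
Require Import Defs.
From HB Require Import structures.
From mathcomp Require Import all_boot all_order all_algebra.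
From mathcomp Require Import all_classical all_reals all_analysis.
Import Order.TTheory GRing.Theory Num.Theory.
Import numFieldNormedType.Exports.
Local Open Scope classical_set_scope.
Local Open Scope ring_scope.
Set Implicit Arguments. Unset Strict Implicit.

Section PsiFacts.
Variables (R : realType) (psi : R -> R).
Hypothesis Hpsi : Wminus psi.

Lemma psi_ge0 x : 0 <= psi x.
Proof. by case: Hpsi. Qed.
Lemma psi_abs x : psi x = psi `|x|.
Proof.
case: Hpsi => _ [Hev _].
by case: (ler0P x) => _ //; rewrite Hev.
Qed.
Lemma psi_cont : continuous psi.
Proof. by case: Hpsi => _ [_ [? _]]. Qed.
Lemma psi0 : psi 0 = 0.
Proof. by case: Hpsi => _ [_ [_ [? _]]]. Qed.
Lemma psi_ltP x y : 0 < x -> x < y -> psi x < psi y.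
Proof. by case: Hpsi => _ [_ [_ [_ [_ [_ H]]]]]; apply: H. Qed.
Lemma psi_lt x y : 0 <= x -> x < y -> psi x < psi y.
Proof.
rewrite le0r => /orP[/eqP-> y0|]; last exact: psi_ltP.
rewrite psi0; apply: (le_lt_trans (psi_ge0 (y/2))); apply: psi_ltP.
  by rewrite divr_gt0.
by rewrite ltr_pdivrMr // ltr_pMr // ltr1n.
Qed.
Lemma psi_le x y : 0 <= x -> x <= y -> psi x <= psi y.
Proof.
move=> x0; rewrite le_eqVlt => /orP[/eqP->//|xy].
exact/ltW/psi_lt.
Qed.
Lemma psi_div_le x M N : 0 < M -> M <= N -> psi (x / N) <= psi (x / M).
Proof.
move=> M0 MN; have N0 := lt_le_trans M0 MN.
rewrite (psi_abs (x/N)) (psi_abs (x/M)) !normrM !normfV.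
rewrite (gtr0_norm M0) (gtr0_norm N0).
apply: psi_le; first by rewrite divr_ge0 // ltW.
have [->|x0] := eqVneq x 0; first by rewrite normr0 !mul0r.
by rewrite ler_pM2l ?normr_gt0 // lef_pV2.
Qed.
Lemma psi_div_lt x M N : x != 0 -> 0 < M -> M < N -> psi (x / N) < psi (x / M).
Proof.
move=> x0 M0 MN; have N0 := lt_trans M0 MN.
rewrite (psi_abs (x/N)) (psi_abs (x/M)) !normrM !normfV.
rewrite (gtr0_norm M0) (gtr0_norm N0).
apply: psi_lt; first by rewrite divr_ge0 // ltW.
by rewrite ltr_pM2l ?normr_gt0 // ltf_pV2.
Qed.
End PsiFacts.

Section NormFacts.
Variables (R : realType) (psi : R -> R).
Hypothesis Hpsi : Wminus psi.
Variables (d : measure_display) (Y : measurableType d)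
  (nu : {finite_measure set Y -> \bar R}) (g : Y -> R).
Hypothesis gb : bounded_fun g.
Hypothesis gm : measurable_fun [set: Y] g.

Let I N := (\int[nu]_(y in [set: Y]) (psi (g y / N))%:E)%E.

Lemma gbound : exists2 B, 0 < B & forall y, `|g y| <= B.
Proof.
have [M [_ HM]] := gb.
exists (`|M| + 1); first by rewrite ltr_pwDr // normr_ge0.
move=> y; apply: (HM (`|M| + 1)) => //.
by rewrite (le_lt_trans (ler_norm M)) // ltrDl.
Qed.

Lemma mpsi N : measurable_fun [set: Y] (fun y => psi (g y / N)).
Proof.
apply: (@measurableT_comp _ _ _ _ _ _ psi). apply: measurable_realfun.continuous_measurable_fun. exact: (psi_cont Hpsi).
by apply: measurable_realfun.measurable_funM => //; exact: measurable_cst.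
Qed.

Lemma ipsi N : 0 < N -> nu.-integrable [set: Y] (EFin \o (fun y => psi (g y / N))).
Proof.
move=> N0; have [B B0 HB] := gbound.
apply: measurable_bounded_integrable => //.
  exact/fin_num_fun_lty/fin_num_measure.
  exact: mpsi.
exists (psi (B / N)); split; first exact: num_real.
move=> x Hx y _ /=; rewrite ger0_norm ?psi_ge0 //.
apply/ltW/(le_lt_trans _ Hx).
rewrite (psi_abs Hpsi) normrM normfV (gtr0_norm N0).
apply: psi_le => //; first by rewrite divr_ge0 // ltW.
by rewrite ler_pM2r ?invr_gt0.
Qed.

Lemma I_fin N : 0 < N -> I N \is a fin_num.
Proof. by move=> N0; apply: integrable_fin_num => //; exact: ipsi. Qed.

Lemma I_anti M N : 0 < M -> M <= N -> (I N <= I M)%E.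
Proof.
move=> M0 MN; apply: ge0_le_integral => //.
- by move=> y _; rewrite lee_fin psi_ge0.
- exact/measurable_realfun.measurable_EFinP/mpsi.
- exact/measurable_realfun.measurable_EFinP/mpsi.
- by move=> y _; rewrite lee_fin (psi_div_le Hpsi).
Qed.

Lemma I_strict M N : 0 < M -> M < N -> (I M <= 1)%E -> (I N < 1)%E.
Proof.
move=> M0 MN IM1; have N0 := lt_trans M0 MN.
have [IMN|INM] := eqVneq (I N) (I M); last first.
  by rewrite (lt_le_trans _ IM1) // lt_neqAle INM I_anti // ltW.
pose h y := psi (g y / M) - psi (g y / N).
have h0 : (\int[nu]_(y in [set: Y]) `|(h y)%:E| = 0)%E.
  rewrite (eq_integral (fun y => (psi (g y / M))%:E - (psi (g y / N))%:E))%E; last first.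
    move=> y _; rewrite gee0_abs ?lee_fin ?subr_ge0 ?(psi_div_le Hpsi) ?ltW //.
  rewrite integralB_EFin //; try exact: ipsi.
  by rewrite -/(I M) -/(I N) IMN subee // I_fin.
move/ae_eq_integral_abs : h0 => /(_ measurableT) [].
  apply/measurable_realfun.measurable_EFinP; apply: measurable_realfun.measurable_funB; exact: mpsi.
move=> Z [mZ nuZ sub].
have -> : I N = 0%E.
  rewrite -(integral0 nu [set: Y]).
  apply: ae_eq_integral => //; first exact/measurable_realfun.measurable_EFinP/mpsi.
  exists Z; split => // y /= /not_implyP [_ Hy].
  apply: sub => /=; apply/not_implyP; split => //.
  have [gy0|gy0] := eqVneq (g y) 0; first by rewrite gy0 mul0r psi0 // in Hy.
  move=> /(congr1 fine) /= /eqP; rewrite subr_eq0 => /eqP Heq.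
  by have := psi_div_lt Hpsi gy0 M0 MN; rewrite Heq ltxx.
by rewrite lte01.
Qed.
End NormFacts.

Section NormFacts2.
Variables (R : realType) (psi : R -> R).
Hypothesis Hpsi : Wminus psi.
Variables (d : measure_display) (Y : measurableType d)
  (nu : {finite_measure set Y -> \bar R}) (g : Y -> R).
Hypothesis gb : bounded_fun g.
Hypothesis gm : measurable_fun [set: Y] g.

Let I N := (\int[nu]_(y in [set: Y]) (psi (g y / N))%:E)%E.
Let nrm := psi_norm psi nu g.

Lemma norm_le N : 0 < N -> (I N <= 1)%E -> (nrm <= N%:E)%E.
Proof. by move=> N0 IN; apply: ereal_inf_lbound; exists N. Qed.

Lemma norm_ge0 : (0 <= nrm)%E.
Proof. by apply/ereal_infP => _ [N [N0 _] <-]; rewrite lee_fin ltW. Qed.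

Lemma norm_ge N : 0 < N -> (1 < I N)%E -> (N%:E <= nrm)%E.
Proof.
move=> N0 IN; apply/ereal_infP => _ [M [M0 IM] <-]; rewrite lee_fin leNgt.
apply/negP => MN; have := I_anti Hpsi nu gm M0 (ltW MN).
by rewrite -/(I N) -/(I M) => /(le_trans)/(_ IM); rewrite leNgt IN.
Qed.

Lemma norm_lt N : 0 < N -> (nrm < N%:E)%E -> (I N < 1)%E.
Proof.
move=> N0 /ereal_inf_ltP [_ [M [M0 IM] <-]]; rewrite lte_fin => MN.
exact: (I_strict Hpsi (nu:=nu) gb gm M0 MN IM).
Qed.

Lemma exists_N : exists2 N, 0 < N & (I N <= 1)%E.
Proof.
have [B B0 HB] := gbound gb.
have nuT : nu [set: Y] \is a fin_num by apply: fin_num_measure.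
set m := fine (nu [set: Y]).
have m0 : 0 <= m by apply: fine_ge0; exact: measure_ge0.
have eps0 : 0 < (m + 1)^-1 by rewrite invr_gt0 ltr_wpDl.
have Hn : \forall t \near (0:R), `|psi 0 - psi t| < (m + 1)^-1.
  exact: (@cvgr_dist_lt _ _ _ (nbhs (0:R)) _ psi (psi 0) (@psi_cont _ _ Hpsi 0) _ eps0).
move/(iffLR (nbhs_ballP _ _)): Hn => [δ δ0 Hb].
have Hδ : psi (δ / 2) < (m + 1)^-1.
  have := Hb (δ / 2); rewrite psi0 // sub0r normrN ger0_norm ?psi_ge0 //.
  apply; rewrite /ball /= sub0r normrN ger0_norm ?divr_ge0 ?ltW //.
  by rewrite ltr_pdivrMr // ltr_pMr // ltr1n.
have d20 : 0 < δ / 2 by rewrite divr_gt0.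
exists (B / (δ / 2)); first by rewrite divr_gt0.
apply: (@le_trans _ _ (\int[nu]_(y in [set: Y]) (cst (psi (δ / 2))%:E) y)%E).
  apply: ge0_le_integral => //.
  - by move=> y _; rewrite lee_fin psi_ge0.
  - exact/measurable_realfun.measurable_EFinP/(mpsi Hpsi gm).
  - move=> y _; rewrite lee_fin /= (psi_abs Hpsi) normrM normfV.
    rewrite (gtr0_norm (divr_gt0 B0 d20)); apply: psi_le => //.
      by rewrite divr_ge0 // ltW // divr_gt0.
    by rewrite invf_div mulrA ler_pdivrMr // mulrC ler_pM2l.
rewrite integral_cst // -[X in (_ * X)%E]fineK; last exact: fin_num_measure.

rewrite -EFinM lee_fin.
apply: le_trans (ler_wpM2r m0 (ltW Hδ)) _.
by rewrite mulrC ler_pdivrMr ?ltr_wpDl // mul1r lerDl.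
Qed.

Lemma norm_fin : nrm \is a fin_num.
Proof.
have [N N0 IN] := exists_N.
rewrite fin_numE; apply/andP; split.
  by apply: contraTN norm_ge0 => /eqP ->.
by apply/eqP => Hn; have := norm_le N0 IN; rewrite Hn leye_eq.
Qed.
End NormFacts2.

Theorem lemma2p7 (R : realType) (psi : R -> R) (d : measure_display)
  (Y : measurableType d) (mu_ : nat -> {finite_measure set Y -> \bar R})
  (mu : {finite_measure set Y -> \bar R}) (f_ : nat -> Y -> R) (f : Y -> R) :
  Wminus psi ->
  (forall k, bounded_fun (f_ k)) -> bounded_fun f ->
  (forall k, measurable_fun [set: Y] (f_ k)) -> measurable_fun [set: Y] f ->
  (forall c : R, 0 <= c ->
     ((fun k => \int[mu_ k]_(y in [set: Y]) (psi (c * f_ k y))%:E) @ \oo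
       --> \int[mu]_(y in [set: Y]) (psi (c * f y))%:E)%E) ->
  (fun k => psi_norm psi (mu_ k) (f_ k)) @ \oo --> psi_norm psi mu f.
Proof.
move=> Hpsi fb Fb fm Fm Hc.
set a := fine (psi_norm psi mu f).
have Ha : psi_norm psi mu f = a%:E by rewrite /a fineK // (norm_fin Hpsi mu Fb Fm).
have a0 : 0 <= a by rewrite -lee_fin -Ha norm_ge0.
have Lim N : 0 < N ->
  ((fun k => \int[mu_ k]_(y in [set: Y]) (psi (f_ k y / N))%:E) @ \oo
       --> \int[mu]_(y in [set: Y]) (psi (f y / N))%:E)%E.
  move=> N0.
  have -> : (fun k => \int[mu_ k]_(y in [set: Y]) (psi (f_ k y / N))%:E)%E =
            (fun k => \int[mu_ k]_(y in [set: Y]) (psi (N^-1 * f_ k y))%:E)%E.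
    by apply: funext => k; apply: eq_integral => y _; rewrite mulrC.
  have -> : (\int[mu]_(y in [set: Y]) (psi (f y / N))%:E)%E =
            (\int[mu]_(y in [set: Y]) (psi (N^-1 * f y))%:E)%E.
    by apply: eq_integral => y _; rewrite mulrC.
  by apply: Hc; rewrite invr_ge0 ltW.
rewrite Ha; apply/fine_cvgP; split.
  by apply: nearW => k; exact: (norm_fin Hpsi (mu_ k) (fb k) (fm k)).
apply/cvgrPdist_le => e e0.
have Hup : \forall k \near \oo,
    fine (psi_norm psi (mu_ k) (f_ k)) <= a + e.
  have N0 : 0 < a + e by rewrite ltr_wpDl.
  have IN := norm_lt Hpsi (nu:=mu) Fb Fm N0 ltac:(by rewrite Ha lte_fin ltrDl).
  have INf := I_fin Hpsi mu Fb Fm N0.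
  have L := Lim _ N0; rewrite -(fineK INf) in L.
  have [Lfin Lcv] := proj1 (fine_cvgP _ _) L.
  have I1 : fine (\int[mu]_(y in [set: Y]) (psi (f y / (a + e)))%:E)%E < 1.
    by rewrite -lte_fin fineK.
  apply: filterS2 Lfin (cvgr_lt _ Lcv _ I1) => k Hf Hl /=.
  rewrite -lee_fin fineK ?(norm_fin Hpsi (mu_ k) (fb k) (fm k)) //.
  apply: norm_le => //; rewrite -(fineK Hf) lee_fin ltW //.
have Hlo : \forall k \near \oo,
    a - e <= fine (psi_norm psi (mu_ k) (f_ k)).
  have [H|N0] := lerP (a - e) 0.
    apply: nearW => k; apply: (le_trans H); apply: fine_ge0; exact: norm_ge0.
  have IN : (1 < \int[mu]_(y in [set: Y]) (psi (f y / (a - e)))%:E)%E.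
    rewrite ltNge; apply/negP => HI.
    have := norm_le N0 HI; rewrite Ha lee_fin => H.
    suff : a - e < a by rewrite ltNge H.
    by rewrite ltrBlDr ltrDl.
  have INf := I_fin Hpsi mu Fb Fm N0.
  have L := Lim _ N0; rewrite -(fineK INf) in L.
  have [Lfin Lcv] := proj1 (fine_cvgP _ _) L.
  have I1 : 1 < fine (\int[mu]_(y in [set: Y]) (psi (f y / (a - e)))%:E)%E.
    by rewrite -lte_fin fineK.
  apply: filterS2 Lfin (cvgr_gt _ Lcv _ I1) => k Hf Hl /=.
  rewrite -lee_fin fineK ?(norm_fin Hpsi (mu_ k) (fb k) (fm k)) //.
  apply: (norm_ge Hpsi (fm k) N0); rewrite -(fineK Hf) lte_fin //.
apply: filterS2 Hlo Hup => k H1 H2 /=.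
by rewrite ler_distlC H1 H2.
Qed.
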